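(* For any projectors $P,Q$ and program $S$: (a) $\{P\};S\equiv\{P\};S;\{Q\}$ iff $sp.S.P\sqsubseteq Q$ iff $P\sqsubseteq wlp.S.Q$ iff $\models\{P\}S\{Q\}$; (b) $S;\{Q\}\equiv\{P\};S;\{Q\}$ iff $sp.S.P^\perp\sqsubseteq Q^\perp$ iff $P^\perp\sqsubseteq wlp.S.Q^\perp$ iff $\models\{P^\perp\}S\{Q^\perp\}$.
   Context: $V$ finite set of qubit variables, $\mathcal{H}_W=\bigotimes_{q\in W}\mathcal{H}_q$, $\mathcal{H}_q\cong\mathbb{C}^2$; operators on subsystems identified with their extension by identity to $\mathcal{H}_V$. Projectors identified with subspaces; $\sqsubseteq$ inclusion (Löwner order); $P^\perp$ orthocomplement. $\rho\models P$ iff the support of $\rho$ is contained in $P$. For a projector $P$ on a register $\bar q$, $\{P\}$ abbreviates the program $\mathbf{assert}\ P[\bar q]$, whose denotation is $\{\rho\mapsto P\rho P\}$. Programs: $S::=\mathbf{skip}\mid\mathbf{abort}\mid \bar q:=0\mid \bar q \mathrel{*}= U\mid \mathbf{assert}\ P[\bar q]\mid [P,Q]_{\bar q}\mid S_0\oplus_p S_1\mid S_0;S_1\mid \mathbf{if}\ P[\bar q]\ \mathbf{then}\ S_1\ \mathbf{else}\ S_0\ \mathbf{end}\mid \mathbf{while}\ P[\bar q]\ \mathbf{do}\ S\ \mathbf{end}$ with denotations (sets of super-operators): $\{\mathrm{id}\}$, $\{0\}$, $\{\rho\mapsto\sum_i|0\rangle_{\bar q}\langle i|\rho|i\rangle_{\bar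 q}\langle 0|\}$, $\{\rho\mapsto U\rho U^\dagger\}$, $\{\rho\mapsto P\rho P\}$, $\{\mathcal{E}$ completely positive trace-nonincreasing on $\mathcal{H}_{\bar q}:\forall\rho\models P,\mathcal{E}(\rho)\models Q\}$, $\{p\mathcal{E}_0+(1-p)\mathcal{E}_1\}$, $\{\mathcal{E}_1\circ\mathcal{E}_0\}$, $\{\mathcal{E}_1\circ\mathcal{P}+\mathcal{E}_0\circ\mathcal{P}^\perp\}$, $\{\sum_{k\ge0}\mathcal{P}^\perp\circ\mathcal{E}_k\circ\mathcal{P}\circ\cdots\circ\mathcal{E}_1\circ\mathcal{P}\}$ respectively, with $\mathcal{E}_i\in\llbracket S_i\rrbracket$ (resp. $\llbracket S\rrbracket$) chosen independently, $\mathcal{P}(\rho)=P\rho P$, $\mathcal{P}^\perp(\rho)=P^\perp\rho P^\perp$. $\models\{P\}S\{Q\}$ iff for all partial density operators $\rho$ on $\mathcal{H}_V$ and $\mathcal{E}\in\llbracket S\rrbracket$, $\rho\models P\Rightarrow\mathcal{E}(\rho)\models Q$. $wlp.S.Q$ is the (existing) $\sqsubseteq$-greatest $P$ with $\models\{P\}S\{Q\}$; $sp.S.P$ the (existing) $\sqsubseteq$-least $Q$ with $\models\{P\}S\{Q\}$. $S\sqsubseteq S'$ iff for all projectors $P,Q$, $\models\{P\}S\{Q\}\Rightarrow\models\{P\}S'\{Q\}$; $S\equiv S'$ iff $S\sqsubseteq S'$ and $S'\sqsubseteq S$. *)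

(* Defs.v *)
From HB Require Import structures.
From mathcomp Require Import all_boot all_order all_algebra.
From mathcomp Require Import reals complex.
From Stdlib Require Import ClassicalEpsilon.
Set Implicit Arguments. Unset Strict Implicit. Unset Printing Implicit Defensive.
Import Order.TTheory GRing.Theory Num.Theory.
Local Open Scope ring_scope.
Local Open Scope complex_scope.

Section QuantumPrograms.
Context (R : realType) (V : finType).

Local Notation C := R[i].

(* An operator on the space with orthonormal basis indexed by the finType I
   is given by its matrix entries  A x y = <x|A|y>.                       *)
Definition opr (I : finType) := I -> I -> C.
Definition vect (I : finType) := I -> C.
Definition superop (I : finType) := opr I -> opr I.

Definition zeroo (I : finType) : opr I := fun _ _ => 0.
Definition ido (I : finType) : opr I := fun x y => if x == y then 1 else 0.
Definition addo (I : finType) (A B : opr I) : opr I := fun x y => A x y + B x y.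
Definition scaleo (I : finType) (a : C) (A : opr I) : opr I := fun x y => a * A x y.
Definition subo (I : finType) (A B : opr I) : opr I := fun x y => A x y - B x y.
Definition mulo (I : finType) (A B : opr I) : opr I :=
  fun x y => \sum_(z : I) A x z * B z y.
Definition adjo (I : finType) (A : opr I) : opr I := fun x y => conjc (A y x).
Definition appo (I : finType) (A : opr I) (v : vect I) : vect I :=
  fun x => \sum_(y : I) A x y * v y.
Definition traceo (I : finType) (A : opr I) : C := \sum_(x : I) A x x.
Definition unito (I : finType) (x y : I) : opr I :=
  fun a b => if (a == x) && (b == y) then 1 else 0.

Definition psd (I : finType) (A : opr I) : Prop :=
  (forall x y, A x y = conjc (A y x)) /\
  (forall v : vect I, 0 <= \sum_(x : I) \sum_(y : I) conjc (v x) * A x y * v y).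
Definition pdo (I : finType) (rho : opr I) : Prop := psd rho /\ traceo rho <= 1.
Definition projector (I : finType) (P : opr I) : Prop :=
  mulo P P = P /\ adjo P = P.
Definition unitary (I : finType) (U : opr I) : Prop :=
  mulo (adjo U) U = @ido I /\ mulo U (adjo U) = @ido I.
Definition subsp (I : finType) (A B : opr I) : Prop :=
  forall v : vect I, exists w : vect I, appo A v = appo B w.
Definition models (I : finType) (rho P : opr I) : Prop := subsp rho P.
(* Loewner order / inclusion of projectors seen as subspaces *)
Definition sqle (I : finType) (P Q : opr I) : Prop := subsp P Q.
Definition orthc (I : finType) (P : opr I) : opr I := subo (@ido I) P.
Definition sandw (I : finType) (A rho : opr I) : opr I := mulo (mulo A rho) (adjo A).

Definition linear_so (I : finType) (E : superop I) : Prop :=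
  forall (a : C) (A B : opr I), E (addo (scaleo a A) B) = addo (scaleo a (E A)) (E B).
(* E (x) id_m acting on H_I (x) C^m *)
Definition ampl (I : finType) (m : nat) (E : superop I) : superop ((I * 'I_m)%type) :=
  fun rho p q => E (fun x y => rho (x, p.2) (y, q.2)) p.1 q.1.
Definition compl_pos (I : finType) (E : superop I) : Prop :=
  forall (m : nat) (rho : opr ((I * 'I_m)%type)), psd rho -> psd (@ampl I m E rho).
Definition trace_nonincr (I : finType) (E : superop I) : Prop :=
  forall rho : opr I, psd rho -> traceo (E rho) <= traceo rho.
Definition cptn (I : finType) (E : superop I) : Prop :=
  [/\ linear_so E, compl_pos E & trace_nonincr E].

(* computational basis of H_V = (x)_{q in V} H_q : assignments V -> bool *)
Definition basis : finType := {ffun V -> bool}.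
(* a register qbar is a (duplicate-free) list of qubit variables; the basis of
   H_qbar = (x)_{i} H_{qbar_i} is indexed by assignments 'I_(size qbar) -> bool *)
Definition lbasis (r : seq V) : finType := {ffun 'I_(size r) -> bool}.
Definition restrict (r : seq V) (x : basis) : lbasis r :=
  [ffun i => x (tnth (in_tuple r) i)].
Definition agree_out (r : seq V) (x y : basis) : bool :=
  [forall v, (v \notin r) ==> (x v == y v)].
(* extension A (x) I_{V \ qbar} of an operator on H_qbar *)
Definition ext (r : seq V) (A : opr (lbasis r)) : opr basis :=
  fun x y => if agree_out r x y then A (restrict r x) (restrict r y) else 0.
(* extension E (x) id_{V \ qbar} of a super-operator on H_qbar *)
Definition ext_so (r : seq V) (E : superop (lbasis r)) : superop basis :=
  fun rho a b => \sum_(x : basis) \sum_(y : basis)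
    rho x y * (if agree_out r a x && agree_out r b y
               then E (unito (restrict r x) (restrict r y)) (restrict r a) (restrict r b)
               else 0).
(* an operator on H_V viewed as an operator on the register enumerating V *)
Definition loc (P : opr basis) : opr (lbasis (enum V)) :=
  fun x y => \sum_(a : basis) \sum_(b : basis)
    (if (restrict (enum V) a == x) && (restrict (enum V) b == y) then P a b else 0).

Inductive prog : Type :=
| Skip
| Abort
| Init (r : seq V)
| Unit (r : seq V) (U : opr (lbasis r))
| Assert (r : seq V) (P : opr (lbasis r))
| Spec (r : seq V) (P Q : opr (lbasis r))
| Choice (p : R) (S0 S1 : prog)
| Seq (S0 S1 : prog)
| If (r : seq V) (P : opr (lbasis r)) (S1 S0 : prog)     (* if P[qbar] then S1 else S0 end *)
| While (r : seq V) (P : opr (lbasis r)) (Sb : prog).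

Fixpoint wf (Sp : prog) : Prop :=
  match Sp with
  | Skip | Abort => True
  | Init r => uniq r
  | Unit r U => uniq r /\ unitary U
  | Assert r P => uniq r /\ projector P
  | Spec r P Q => [/\ uniq r, projector P & projector Q]
  | Choice p S0 S1 => [/\ 0 <= p <= 1, wf S0 & wf S1]
  | Seq S0 S1 => wf S0 /\ wf S1
  | If r P S1 S0 => [/\ uniq r, projector P, wf S1 & wf S0]
  | While r P Sb => [/\ uniq r, projector P & wf Sb]
  end.

Definition cvgC (u : nat -> C) (l : C) : Prop :=
  forall e : R, 0 < e -> exists N : nat, forall n, (N <= n)%N -> `|u n - l| < e%:C.
Definition cvg_op (I : finType) (u : nat -> opr I) (L : opr I) : Prop :=
  forall x y, cvgC (fun n => u n x y) (L x y).
Definition sum_op (I : finType) (n : nat) (f : nat -> opr I) : opr I :=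
  fun x y => \sum_(k < n) f k x y.

(* E_k o P o E_(k-1) o P o ... o E_1 o P  (identity for k = 0),
   with Es 0 = E_1, Es 1 = E_2, ... *)
Fixpoint loop_body (Pm : superop basis) (Es : nat -> superop basis) (k : nat)
  : superop basis :=
  match k with
  | 0 => fun rho => rho
  | k'.+1 => fun rho => Es k' (Pm (loop_body Pm Es k' rho))
  end.

Fixpoint sem (Sp : prog) : superop basis -> Prop :=
  match Sp with
  | Skip => fun E => E = (fun rho => rho)
  | Abort => fun E => E = (fun _ => @zeroo basis)
  | Init r => fun E => E = (fun rho =>
      fun a b => \sum_(i : lbasis r)
        mulo (mulo (ext (unito [ffun _ => false] i)) rho)
             (ext (unito i [ffun _ => false])) a b)
  | Unit r U => fun E => E = sandw (ext U)
  | Assert r P => fun E => E = (fun rho => mulo (mulo (ext P) rho) (ext P))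
  | Spec r P Q => fun E => exists F : superop (lbasis r),
      [/\ cptn F,
          (forall rho, pdo rho -> models rho P -> models (F rho) Q)
        & E = ext_so F]
  | Choice p S0 S1 => fun E => exists E0 E1,
      [/\ sem S0 E0, sem S1 E1 &
          E = (fun rho => addo (scaleo (p%:C) (E0 rho)) (scaleo ((1 - p)%:C) (E1 rho)))]
  | Seq S0 S1 => fun E => exists E0 E1,
      [/\ sem S0 E0, sem S1 E1 & E = (fun rho => E1 (E0 rho))]
  | If r P S1 S0 => fun E => exists E1 E0,
      [/\ sem S1 E1, sem S0 E0 &
          E = (fun rho => addo (E1 (mulo (mulo (ext P) rho) (ext P)))
                               (E0 (mulo (mulo (orthc (ext P)) rho) (orthc (ext P)))))]
  | While r P Sb => fun E => exists Es : nat -> superop basis,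
      (forall k, sem Sb (Es k)) /\
      (forall rho, cvg_op
         (fun n => sum_op n (fun k =>
            let Pp := orthc (ext P) in
            mulo (mulo Pp (loop_body (fun s => mulo (mulo (ext P) s) (ext P)) Es k rho)) Pp))
         (E rho))
  end.

Definition hoare (P : opr basis) (S0 : prog) (Q : opr basis) : Prop :=
  forall (rho : opr basis) (E : superop basis),
    pdo rho -> sem S0 E -> models rho P -> models (E rho) Q.

Definition refines (S0 S1 : prog) : Prop :=
  forall P Q : opr basis, projector P -> projector Q -> hoare P S0 Q -> hoare P S1 Q.
Definition prog_equiv (S0 S1 : prog) : Prop := refines S0 S1 /\ refines S1 S0.

(* weakest liberal precondition and strongest postcondition: the (existing)
   greatest / least projector making the triple valid, picked by choice *)
Definition is_wlp (S0 : prog) (Q W : opr basis) : Prop :=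
  [/\ projector W, hoare W S0 Q &
      forall P, projector P -> hoare P S0 Q -> sqle P W].
Definition is_sp (S0 : prog) (P W : opr basis) : Prop :=
  [/\ projector W, hoare P S0 W &
      forall Q, projector Q -> hoare P S0 Q -> sqle W Q].
Definition wlp (S0 : prog) (Q : opr basis) : opr basis :=
  epsilon (inhabits (@zeroo basis)) (is_wlp S0 Q).
Definition sp (S0 : prog) (P : opr basis) : opr basis :=
  epsilon (inhabits (@zeroo basis)) (is_sp S0 P).

Definition assertV (P : opr basis) : prog := @Assert (enum V) (loc P).

End QuantumPrograms.

(* Main.v *)
From HB Require Import structures.
From mathcomp Require Import all_boot all_order all_algebra.
From mathcomp Require Import reals complex.
Require Import Defs.
From Stdlib Require Import ClassicalEpsilon FunctionalExtensionality Classical.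
From mathcomp Require Import ring lra.
Set Implicit Arguments. Unset Strict Implicit. Unset Printing Implicit Defensive.
Import Order.TTheory GRing.Theory Num.Theory.
Local Open Scope ring_scope.
Local Open Scope complex_scope.

Section Scal.
Context (R : realType).
Lemma RL1 (r c x : R) : 0 <= r -> 0 <= c -> c * r = 0 ->
  (forall s, 0 < s -> s * x <= s * s * r + c) -> x <= 0.
Proof.
move=> r0 c0 cr h; rewrite leNgt; apply/negP => x0.
have /eqP := cr; rewrite mulf_eq0 => /orP [/eqP c00|/eqP r00].
  have s0 : 0 < x / (r + 1) by rewrite divr_gt0 // ltr_wpDl.
  have := h _ s0; rewrite c00 addr0 => h2.
  have h3 : x <= x / (r + 1) * r.
    by rewrite -(ler_pM2l s0) mulrA.
  move: h3; rewrite mulrAC ler_pdivlMr ?ltr_wpDl //.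
  by move=> h4; nra.
have s0 : 0 < (c + 1) / x by rewrite divr_gt0 // ltr_wpDl.
have := h _ s0; rewrite r00 mulr0 add0r -mulrA mulVf ?gt_eqF // mulr1.
lra.
Qed.

Lemma expr_comp (c1 c2 a1 a2 b1 b2 r1 r2 t1 t2 : R) :
  (Complex c1 c2) + (Complex t1 t2) * (Complex a1 a2) + conjc (Complex t1 t2) * (Complex b1 b2) + (Complex t1 t2) * conjc (Complex t1 t2) * (Complex r1 r2)
  = Complex (c1 + (t1*a1 - t2*a2) + (t1*b1 + t2*b2) + (t1*t1+t2*t2)*r1) (c2 + (t1*a2 + t2*a1) + (t1*b2 - t2*b1) + (t1*t1+t2*t2)*r2) :> R[i].
Proof. rewrite /=. simpc. congr Complex; ring. Qed.

Lemma GL (c0 a al be : R[i]) : 0 <= a -> 0 <= c0 -> c0 * a = 0 ->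
  (forall t : R[i], 0 <= c0 + t * al + conjc t * be + t * conjc t * a) -> al = 0 /\ be = 0.
Proof.
case: c0 => c1 c2; case: a => r1 r2; case: al => a1 a2; case: be => b1 b2.
rewrite !lecE /= => /andP [/eqP r20 r10] /andP [/eqP c20 c10].
rewrite c20 r20 /=; simpc => /eqP; rewrite eq_complex /= => /andP [/eqP cr _] h.
have H t1 t2 := h (Complex t1 t2).
have E1 : a1 = b1.
  have := H 0 1; rewrite expr_comp lecE /= => /andP [/eqP e _]; lra.
have E2 : a2 = - b2.
  have := H 1 0; rewrite expr_comp lecE /= => /andP [/eqP e _]; lra.
have X1 : a1 + b1 <= 0.
  apply: (RL1 r10 c10 cr) => s s0; have := H (- s) 0; rewrite expr_comp lecE /= => /andP [_ e]; lra.
have X2 : - (a1 + b1) <= 0.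
  apply: (RL1 r10 c10 cr) => s s0; have := H s 0; rewrite expr_comp lecE /= => /andP [_ e]; lra.
have X3 : a2 - b2 <= 0.
  apply: (RL1 r10 c10 cr) => s s0; have := H 0 s; rewrite expr_comp lecE /= => /andP [_ e]; lra.
have X4 : - (a2 - b2) <= 0.
  apply: (RL1 r10 c10 cr) => s s0; have := H 0 (- s); rewrite expr_comp lecE /= => /andP [_ e]; lra.
have -> : a1 = 0 by lra.
have -> : b1 = 0 by lra.
have -> : a2 = 0 by lra.
have -> : b2 = 0 by lra.
by [].
Qed.
End Scal.

Section Ops.
Context (R : realType) (I : finType).
Local Notation C := R[i].
Local Notation opr := (opr R I).
Local Notation vect := (vect R I).
Implicit Types A B D P Q : opr.
Implicit Types u v w : vect.

Lemma opr_ext A B : (forall x y, A x y = B x y) -> A = B.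
Proof. by move=> h; apply: functional_extensionality => x; apply: functional_extensionality => y. Qed.
Lemma vect_ext u w : (forall x, u x = w x) -> u = w.
Proof. by move=> h; apply: functional_extensionality. Qed.

Definition ip u w : C := \sum_x conjc (u x) * w x.
Definition sf A u w : C := ip u (appo A w).
Definition herm A := forall x y, A x y = conjc (A y x).
Definition outer u w : opr := fun x y => u x * conjc (w y).
Definition ev (x : I) : vect := fun y => if y == x then 1 else 0.
Definition colo A (x : I) : vect := fun y => A y x.

Lemma conjc_sum (J : Type) (r : seq J) (P : pred J) (f : J -> C) :
  conjc (\sum_(j <- r | P j) f j) = \sum_(j <- r | P j) conjc (f j).
Proof. by rewrite rmorph_sum. Qed.
Lemma conjcM' (a b : C) : conjc (a * b) = conjc a * conjc b. Proof. exact: rmorphM. Qed.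
Lemma conjcD' (a b : C) : conjc (a + b) = conjc a + conjc b. Proof. exact: rmorphD. Qed.
Lemma conjcB' (a b : C) : conjc (a - b) = conjc a - conjc b. Proof. exact: rmorphB. Qed.
Lemma conjcN' (a : C) : conjc (- a) = - conjc a. Proof. exact: rmorphN. Qed.
Lemma conjc0' : conjc (0 : C) = 0. Proof. exact: rmorph0. Qed.
Lemma conjc1' : conjc (1 : C) = 1. Proof. exact: rmorph1. Qed.
Lemma conjcK' (a : C) : conjc (conjc a) = a. Proof. exact: conjcK. Qed.

Lemma psdE A : psd A <-> herm A /\ forall v, 0 <= sf A v v.
Proof.
have e : forall v, \sum_x \sum_y conjc (v x) * A x y * v y = sf A v v.
  move=> v; rewrite /sf /ip /appo; apply: eq_bigr => x _.
  by rewrite big_distrr /=; apply: eq_bigr => y _; rewrite mulrA.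
by split=> [[h1 h2]|[h1 h2]]; split=> // v; rewrite ?e // -e.
Qed.

Lemma mulo_assoc A B D : mulo (mulo A B) D = mulo A (mulo B D).
Proof.
apply: opr_ext => x y; rewrite /mulo.
under eq_bigr do rewrite big_distrl /=.
rewrite exchange_big /=; apply: eq_bigr => z _.
by rewrite big_distrr /=; apply: eq_bigr => w _; rewrite mulrA.
Qed.

Lemma appo_mulo A B v : appo (mulo A B) v = appo A (appo B v).
Proof.
apply: vect_ext => x; rewrite /appo /mulo.
under eq_bigr do rewrite big_distrl /=.
rewrite exchange_big /=; apply: eq_bigr => z _.
by rewrite big_distrr /=; apply: eq_bigr => w _; rewrite mulrA.
Qed.

Lemma adjoK A : adjo (adjo A) = A.
Proof. by apply: opr_ext => x y; rewrite /adjo conjcK. Qed.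

Lemma adjo_mulo A B : adjo (mulo A B) = mulo (adjo B) (adjo A).
Proof.
apply: opr_ext => x y; rewrite /adjo /mulo conjc_sum; apply: eq_bigr => z _.
by rewrite conjcM' mulrC.
Qed.

Lemma conj_ip u w : conjc (ip u w) = ip w u.
Proof. by rewrite /ip conjc_sum; apply: eq_bigr => x _; rewrite conjcM' conjcK mulrC. Qed.

Lemma ip_adj A u w : ip u (appo A w) = ip (appo (adjo A) u) w.
Proof.
rewrite /ip /appo /adjo.
under eq_bigr do rewrite big_distrr /=.
rewrite exchange_big /=; apply: eq_bigr => z _.
rewrite conjc_sum big_distrl /=; apply: eq_bigr => y _.
by rewrite conjcM' conjcK mulrA [conjc (u y) * _]mulrC.
Qed.

Lemma appo_ev A y : appo A (ev y) = colo A y.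
Proof.
apply: vect_ext => x; rewrite /appo /ev /colo (bigD1 y) //= eqxx mulr1 big1 ?addr0 //.
by move=> z /negbTE ->; rewrite mulr0.
Qed.

Lemma ip_ev x w : ip (ev x) w = w x.
Proof.
rewrite /ip /ev (bigD1 x) //= eqxx conjc1' mul1r big1 ?addr0 //.
by move=> z /negbTE ->; rewrite conjc0' mul0r.
Qed.

Lemma ip_evr u x : ip u (ev x) = conjc (u x).
Proof. by rewrite -conj_ip ip_ev. Qed.

Lemma herm_adjo A : herm A -> adjo A = A.
Proof. by move=> h; apply: opr_ext => x y; rewrite /adjo h conjcK. Qed.
Lemma adjo_herm A : adjo A = A -> herm A.
Proof. by move=> h x y; rewrite -{1}h. Qed.

Lemma sf_sandw A D v : sf (mulo (mulo A D) (adjo A)) v v = sf D (appo (adjo A) v) (appo (adjo A) v).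
Proof. by rewrite /sf !appo_mulo ip_adj. Qed.

Lemma psd_sandw A D : psd D -> psd (mulo (mulo A D) (adjo A)).
Proof.
move=> /psdE [h1 h2]; apply/psdE; split=> [|v]; last by rewrite sf_sandw.
apply: adjo_herm; rewrite !adjo_mulo adjoK (herm_adjo h1).
by rewrite mulo_assoc.
Qed.


Definition vadd u w : vect := fun x => u x + w x.
Definition vscale (t : C) u : vect := fun x => t * u x.

Lemma appo_vadd A u w : appo A (vadd u w) = vadd (appo A u) (appo A w).
Proof. by apply: vect_ext => x; rewrite /appo /vadd -big_split /=; apply: eq_bigr => y _; rewrite mulrDr. Qed.
Lemma appo_vscale A t u : appo A (vscale t u) = vscale t (appo A u).
Proof. by apply: vect_ext => x; rewrite /appo /vscale mulr_sumr; apply: eq_bigr => y _; rewrite mulrCA. Qed.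
Lemma ip_vaddr u w1 w2 : ip u (vadd w1 w2) = ip u w1 + ip u w2.
Proof. by rewrite /ip -big_split /=; apply: eq_bigr => y _; rewrite mulrDr. Qed.
Lemma ip_vaddl u1 u2 w : ip (vadd u1 u2) w = ip u1 w + ip u2 w.
Proof. by rewrite /ip -big_split /=; apply: eq_bigr => y _; rewrite conjcD' mulrDl. Qed.
Lemma ip_vscaler u t w : ip u (vscale t w) = t * ip u w.
Proof. by rewrite /ip mulr_sumr; apply: eq_bigr => y _; rewrite mulrCA. Qed.
Lemma ip_vscalel t u w : ip (vscale t u) w = conjc t * ip u w.
Proof. by rewrite /ip mulr_sumr; apply: eq_bigr => y _; rewrite conjcM' mulrA. Qed.

Lemma sf_expand A u w t :
  sf A (vadd u (vscale t w)) (vadd u (vscale t w)) =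
  sf A u u + t * sf A u w + conjc t * sf A w u + t * conjc t * sf A w w.
Proof.
rewrite /sf appo_vadd appo_vscale ip_vaddl ip_vaddr ip_vaddr ip_vscalel ip_vscalel.
rewrite !ip_vscaler; ring.
Qed.

Lemma psd_null A u : psd A -> sf A u u = 0 -> appo A u = (fun _ => 0).
Proof.
move=> /psdE [_ hA] h0; apply: vect_ext => x.
have [_ ] := @GL R (sf A u u) (sf A (ev x) (ev x)) (sf A u (ev x)) (sf A (ev x) u) (hA _) (hA _) ltac:(by rewrite h0 mul0r)
  ltac:(by move=> t; rewrite -sf_expand).
by rewrite /sf ip_ev.
Qed.

Lemma polar A : (forall u, sf A u u = 0) -> A = zeroo R (I:=I).
Proof.
move=> h; apply: opr_ext => x y.
have [e _] := @GL R (sf A (ev x) (ev x)) (sf A (ev y) (ev y)) (sf A (ev x) (ev y)) (sf A (ev y) (ev x))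
  ltac:(by rewrite h) ltac:(by rewrite h) ltac:(by rewrite h mul0r)
  ltac:(by move=> t; rewrite -sf_expand h).
by move: e; rewrite /sf ip_ev appo_ev.
Qed.

Lemma mulo_addl A B D : mulo (addo A B) D = addo (mulo A D) (mulo B D).
Proof. by apply: opr_ext => x y; rewrite /mulo /addo -big_split; apply: eq_bigr => z _; rewrite mulrDl. Qed.
Lemma mulo_addr A B D : mulo A (addo B D) = addo (mulo A B) (mulo A D).
Proof. by apply: opr_ext => x y; rewrite /mulo /addo -big_split; apply: eq_bigr => z _; rewrite mulrDr. Qed.
Lemma mulo_subl A B D : mulo (subo A B) D = subo (mulo A D) (mulo B D).
Proof. by apply: opr_ext => x y; rewrite /mulo /subo -sumrB; apply: eq_bigr => z _; rewrite mulrBl. Qed.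
Lemma mulo_subr A B D : mulo A (subo B D) = subo (mulo A B) (mulo A D).
Proof. by apply: opr_ext => x y; rewrite /mulo /subo -sumrB; apply: eq_bigr => z _; rewrite mulrBr. Qed.
Lemma mulo_scalel c A B : mulo (scaleo c A) B = scaleo c (mulo A B).
Proof. by apply: opr_ext => x y; rewrite /mulo /scaleo mulr_sumr; apply: eq_bigr => z _; rewrite mulrA. Qed.
Lemma mulo_scaler c A B : mulo A (scaleo c B) = scaleo c (mulo A B).
Proof. by apply: opr_ext => x y; rewrite /mulo /scaleo mulr_sumr; apply: eq_bigr => z _; rewrite mulrCA. Qed.
Lemma mulo0l A : mulo (zeroo R (I:=I)) A = zeroo R (I:=I).
Proof. by apply: opr_ext => x y; rewrite /mulo /zeroo big1 // => z _; rewrite mul0r. Qed.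
Lemma mulo0r A : mulo A (zeroo R (I:=I)) = zeroo R (I:=I).
Proof. by apply: opr_ext => x y; rewrite /mulo /zeroo big1 // => z _; rewrite mulr0. Qed.
Lemma mulo1l A : mulo (ido R (I:=I)) A = A.
Proof.
apply: opr_ext => x y; rewrite /mulo /ido (bigD1 x) //= eqxx mul1r big1 ?addr0 //.
by move=> z; rewrite eq_sym => /negbTE ->; rewrite mul0r.
Qed.
Lemma mulo1r A : mulo A (ido R (I:=I)) = A.
Proof.
apply: opr_ext => x y; rewrite /mulo /ido (bigD1 y) //= eqxx mulr1 big1 ?addr0 //.
by move=> z /negbTE ->; rewrite mulr0.
Qed.
Lemma adjo_add A B : adjo (addo A B) = addo (adjo A) (adjo B).
Proof. by apply: opr_ext => x y; rewrite /adjo /addo conjcD'. Qed.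
Lemma adjo_sub A B : adjo (subo A B) = subo (adjo A) (adjo B).
Proof. by apply: opr_ext => x y; rewrite /adjo /subo conjcB'. Qed.
Lemma adjo_scale c A : adjo (scaleo c A) = scaleo (conjc c) (adjo A).
Proof. by apply: opr_ext => x y; rewrite /adjo /scaleo conjcM'. Qed.
Lemma adjo1 : adjo (ido R (I:=I)) = ido R (I:=I).
Proof. by apply: opr_ext => x y; rewrite /adjo /ido eq_sym; case: eqP => _; [exact: conjc1' | exact: conjc0']. Qed.
Lemma adjo0 : adjo (zeroo R (I:=I)) = zeroo R (I:=I).
Proof. by apply: opr_ext => x y; rewrite /adjo /zeroo conjc0'. Qed.

Lemma proj_herm P : projector P -> adjo P = P.
Proof. by case. Qed.
Lemma proj_idem P : projector P -> mulo P P = P.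
Proof. by case. Qed.
Lemma orthc_proj P : projector P -> projector (orthc P).
Proof.
move=> [h1 h2]; split; last by rewrite /orthc adjo_sub adjo1 h2.
by rewrite /orthc mulo_subl !mulo_subr !mulo1l !mulo1r h1; apply: opr_ext => x y; rewrite /subo subrr subr0.
Qed.
Lemma orthcK P : orthc (orthc P) = P.
Proof. by apply: opr_ext => x y; rewrite /orthc /subo opprB addrC subrK. Qed.
Lemma proj_orth P : projector P -> mulo P (orthc P) = zeroo R (I:=I).
Proof. by move=> [h1 _]; rewrite /orthc mulo_subr mulo1r h1; apply: opr_ext => x y; rewrite /subo subrr. Qed.
Lemma orth_proj P : projector P -> mulo (orthc P) P = zeroo R (I:=I).
Proof. by move=> [h1 _]; rewrite /orthc mulo_subl mulo1l h1; apply: opr_ext => x y; rewrite /subo subrr. Qed.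
Lemma zero_proj : projector (zeroo R (I:=I)).
Proof. by split; rewrite ?mulo0l ?adjo0. Qed.

Lemma models_mulo P D : projector P -> models D P -> mulo P D = D.
Proof.
move=> [hP _] hm; apply: opr_ext => x y.
have [w hw] := hm (ev y).
have hw' : colo D y = appo P w by rewrite -appo_ev.
have e : mulo P D x y = appo (mulo P D) (ev y) x by rewrite appo_ev.
by rewrite e appo_mulo appo_ev hw' -appo_mulo hP -hw'.
Qed.
Lemma mulo_models P D : mulo P D = D -> models D P.
Proof. by move=> h v; exists (appo D v); rewrite -appo_mulo h. Qed.
Lemma models_mulo_r P D : projector P -> herm D -> models D P -> mulo D P = D.
Proof.
move=> hP hD hm; have := congr1 (@adjo R I) (models_mulo hP hm).
by rewrite adjo_mulo (herm_adjo hD) (proj_herm hP).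
Qed.
Lemma models_scale c D P : models D P -> models (scaleo c D) P.
Proof.
move=> h v; have [w hw] := h (vscale c v); exists w; rewrite -hw appo_vscale.
by apply: vect_ext => x; rewrite /appo /vscale /scaleo mulr_sumr; apply: eq_bigr => y _; rewrite mulrA.
Qed.
Lemma subsp_trans A B D : subsp A B -> subsp B D -> subsp A D.
Proof. by move=> h1 h2 v; have [w hw] := h1 v; have [z hz] := h2 w; exists z; rewrite hw. Qed.
Lemma models_zero P : models (zeroo R (I:=I)) P.
Proof.
move=> v; exists (fun _ => 0); apply: vect_ext => x.
by rewrite /appo /zeroo !big1 // => y _; rewrite ?mulr0 ?mul0r.
Qed.
Lemma models_zero_eq D : models D (zeroo R (I:=I)) -> D = zeroo R (I:=I).
Proof.
move=> h; apply: opr_ext => x y; have [w hw] := h (ev y).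
have := congr1 (fun v => v x) hw; rewrite appo_ev /colo /appo /zeroo => ->.
by rewrite big1 // => z _; rewrite mul0r.
Qed.

Lemma sf_add A B u : sf (addo A B) u u = sf A u u + sf B u u.
Proof.
rewrite /sf -ip_vaddr; congr ip; apply: vect_ext => x.
by rewrite /appo /vadd /addo -big_split; apply: eq_bigr => y _; rewrite mulrDl.
Qed.
Lemma sf_scale c A u : sf (scaleo c A) u u = c * sf A u u.
Proof.
rewrite /sf -ip_vscaler; congr ip; apply: vect_ext => x.
by rewrite /appo /vscale /scaleo mulr_sumr; apply: eq_bigr => y _; rewrite mulrA.
Qed.
Lemma psd_zero : psd (zeroo R (I:=I)).
Proof.
apply/psdE; split=> [x y|v]; first by rewrite /zeroo conjc0'.
have -> : sf (zeroo R (I:=I)) v v = 0.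
  rewrite /sf /ip big1 // => x _; rewrite /appo /zeroo big1 ?mulr0 // => y _; by rewrite mul0r.
exact: lexx.
Qed.
Lemma psd_add A B : psd A -> psd B -> psd (addo A B).
Proof.
move=> /psdE [h1 h2] /psdE [h3 h4]; apply/psdE; split=> [x y|v].
  by rewrite /addo conjcD' -h1 -h3.
by rewrite sf_add addr_ge0.
Qed.
Lemma real_ge0_conj (c : C) : 0 <= c -> conjc c = c.
Proof. by case: c => a b; rewrite lecE /= => /andP [/eqP hb _]; rewrite hb oppr0. Qed.
Lemma psd_scale c A : 0 <= c -> psd A -> psd (scaleo c A).
Proof.
move=> c0 /psdE [h1 h2]; apply/psdE; split=> [x y|v].
  by rewrite /scaleo conjcM' -h1 real_ge0_conj.
by rewrite sf_scale mulr_ge0.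
Qed.
Lemma psd_sum (J : Type) (r : seq J) (f : J -> opr) :
  (forall j, psd (f j)) -> psd (fun x y => \sum_(j <- r) f j x y).
Proof.
move=> h; elim: r => [|j r IH].
  have -> : (fun x y => \sum_(j <- [::]) f j x y) = zeroo R (I:=I).
    by apply: opr_ext => x y; rewrite big_nil.
  exact: psd_zero.
have -> : (fun x y => \sum_(j0 <- j :: r) f j0 x y) = addo (f j) (fun x y => \sum_(j <- r) f j x y).
  by apply: opr_ext => x y; rewrite big_cons.
exact: psd_add.
Qed.

Lemma appo_outer u w v : appo (outer u w) v = vscale (ip w v) u.
Proof.
apply: vect_ext => x; rewrite /appo /outer /vscale /ip mulr_suml; apply: eq_bigr => y _.
by rewrite -mulrA mulrC.
Qed.
Lemma psd_outer u : psd (outer u u).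
Proof.
apply/psdE; split=> [x y|v]; first by rewrite /outer conjcM' conjcK mulrC.
rewrite /sf appo_outer ip_vscaler -conj_ip mulrC; exact: mulcJ_ge0.
Qed.
Lemma models_outer u w P : projector P -> appo P u = u -> models (outer u w) P.
Proof.
move=> _ hu v; exists (vscale (ip w v) u); rewrite appo_outer appo_vscale hu //.
Qed.

Lemma trace_sf A : traceo A = \sum_x sf A (ev x) (ev x).
Proof. by rewrite /traceo; apply: eq_bigr => x _; rewrite /sf ip_ev appo_ev. Qed.
Lemma trace_ge0 A : psd A -> 0 <= traceo A.
Proof. by move=> /psdE [_ h]; rewrite trace_sf sumr_ge0. Qed.

End Ops.

Section Span.
Context (R : realType) (I : finType).
Local Notation C := R[i].
Local Notation opr := (opr R I).
Local Notation vect := (vect R I).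
Implicit Types A B D P Q W : opr.
Implicit Types u v w : vect.

Definition vzero : vect := fun _ => 0.
Definition subspace (X : vect -> Prop) :=
  [/\ X vzero, (forall u w, X u -> X w -> X (vadd u w)) & (forall c u, X u -> X (vscale c u))].

Fixpoint inspan (L : seq vect) (v : vect) : Prop :=
  match L with
  | [::] => v = vzero
  | w :: L' => exists c u, inspan L' u /\ v = vadd (vscale c w) u
  end.

Lemma inspan_sub L : subspace (inspan L).
Proof.
elim: L => [|w L [h0 hD hS]] /=.
  split=> [//|u w -> ->|c u ->]; apply: vect_ext => x; rewrite /vadd /vscale /vzero ?addr0 ?mulr0 //.
split.
- exists 0, vzero; split=> //; apply: vect_ext => x; rewrite /vadd /vscale /vzero mul0r addr0 //.
- move=> u1 u2 [c1 [v1 [h1 ->]]] [c2 [v2 [h2 ->]]]; exists (c1 + c2), (vadd v1 v2); split; first exact: hD.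
  apply: vect_ext => x; rewrite /vadd /vscale; ring.
- move=> c u [c1 [v1 [h1 ->]]]; exists (c * c1), (vscale c v1); split; first exact: hS.
  apply: vect_ext => x; rewrite /vadd /vscale; ring.
Qed.

Lemma inspan_X (X : vect -> Prop) L v : subspace X -> (forall w, List.In w L -> X w) -> inspan L v -> X v.
Proof.
move=> [h0 hD hS]; elim: L v => [|w L IH] v /= hL; first by move=> ->.
move=> [c [u [hu ->]]]; apply: hD; first by apply: hS; apply: hL; left.
by apply: IH => // z hz; apply: hL; right.
Qed.

Lemma fin_span_aux n : forall (D : {set I}), #|D| = n -> forall X : vect -> Prop, subspace X ->
  (forall v, X v -> forall x, x \notin D -> v x = 0) -> exists L, forall v, X v <-> inspan L v.
Proof.
elim: n => [|n IH] D hD X hX hsupp.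
  exists [::] => v /=; split=> [hv|->]; last by case: hX.
  apply: vect_ext => x; apply: hsupp => //; move: hD => /eqP; rewrite cards_eq0 => /eqP ->.
  by rewrite inE.
have [d dD] : exists d, d \in D.
  by apply/set0Pn; rewrite -card_gt0 hD.
pose X' v := X v /\ v d = 0.
have hX' : subspace X'.
  case: hX => h0 hD' hS; split.
  - by split.
  - by move=> u w [h1 e1] [h2 e2]; split; [exact: hD' | rewrite /vadd e1 e2 addr0].
  - by move=> c u [h1 e1]; split; [exact: hS | rewrite /vscale e1 mulr0].
have hD1 : #|D :\ d| = n by move: hD; rewrite (cardsD1 d D) dD => -[].
have [L' hL'] := IH (D :\ d) hD1 X' hX' ltac:(move=> v [hv hvd] x; rewrite !inE negb_and negbK;
    case/orP => [/eqP -> //|]; exact: hsupp).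
case: (classic (exists v0, X v0 /\ v0 d <> 0)) => [[v0 [Xv0 v0d]]|hno].
  exists (v0 :: L') => v; split=> [hv|] /=.
    exists (v d / v0 d), (vadd v (vscale (- (v d / v0 d)) v0)); split.
      apply/hL'; split.
        by case: hX => _ hD' hS; apply: hD' => //; exact: hS.
      rewrite /vadd /vscale mulNr divfK; first by rewrite subrr.
      by apply/eqP.
    by apply: vect_ext => x; rewrite /vadd /vscale; ring.
  move=> [c [u [hu ->]]]; case: hX => _ hD' hS; apply: hD'; first exact: hS.
  by have [] := (proj2 (hL' u) hu).
exists L' => v; rewrite -hL'; split=> [hv|[]//]; split=> //.
by apply: NNPP => hvd; apply: hno; exists v.
Qed.

Lemma fin_span (X : vect -> Prop) : subspace X -> exists L, forall v, X v <-> inspan L v.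
Proof. by move=> hX; apply: (@fin_span_aux #|[set: I]| [set: I]) => // v _ x; rewrite inE. Qed.

Lemma mulo_outer_l A u w : mulo A (outer u w) = outer (appo A u) w.
Proof. by apply: opr_ext => x y; rewrite /mulo /outer /appo mulr_suml; apply: eq_bigr => z _; rewrite mulrA. Qed.
Lemma mulo_outer_r A u w : mulo (outer u w) A = outer u (appo (adjo A) w).
Proof.
apply: opr_ext => x y; rewrite /mulo /outer /appo /adjo conjc_sum mulr_sumr; apply: eq_bigr => z _.
by rewrite conjcM' conjcK; ring.
Qed.
Lemma adjo_outer u w : adjo (outer u w) = outer w u.
Proof. by apply: opr_ext => x y; rewrite /adjo /outer conjcM' conjcK mulrC. Qed.

Lemma ip_self_eq0 u : ip u u = 0 -> u = vzero.
Proof.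
move=> h; apply: vect_ext => x.
have := @psumr_eq0P _ _ predT (fun x => conjc (u x) * u x) ltac:(move=> y _ /=; rewrite mulrC; exact: mulcJ_ge0) h x isT.
by move/eqP; rewrite mulf_eq0 conjc_eq0 orbb => /eqP.
Qed.

Lemma proj_fix W v : projector W -> (exists w, v = appo W w) <-> appo W v = v.
Proof.
move=> [hW _]; split=> [[w ->]|h]; last by exists v.
by rewrite -appo_mulo hW.
Qed.

Lemma proj_span L : exists W, projector W /\ forall v, appo W v = v <-> inspan L v.
Proof.
elim: L => [|w L [W [hW hWL]]].
  exists (zeroo R (I:=I)); split; first exact: zero_proj.
  move=> v /=; have -> : appo (zeroo R (I:=I)) v = vzero.
    by apply: vect_ext => x; rewrite /appo /zeroo /vzero big1 // => y _; rewrite mul0r.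
  by split=> ->.
have [hWW hWa] := hW.
have [_ hLD hLS] := inspan_sub L.
pose u := vadd w (vscale (-1) (appo W w)).
have Wu : appo W u = vzero.
  rewrite /u appo_vadd appo_vscale -appo_mulo hWW.
  by apply: vect_ext => x; rewrite /vadd /vscale /vzero; ring.
have WL v : inspan L v -> appo W v = v by move=> h; apply/hWL.
case: (classic (u = vzero)) => [u0|un0].
  have Ww : appo W w = w.
    apply: vect_ext => x; have := congr1 (fun f => f x) u0; rewrite /u /vadd /vscale /vzero.
    by move=> e; apply/eqP; rewrite eq_sym -subr_eq0; apply/eqP; rewrite -[RHS]e; ring.
  exists W; split=> // v; split=> [hv|[c [u' [hu' ->]]]] /=.
    exists 0, v; split; first by apply/hWL.
    by apply: vect_ext => x; rewrite /vadd /vscale mul0r add0r.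
  by rewrite appo_vadd appo_vscale Ww WL.
set n := ip u u.
have n0 : n != 0 by apply/eqP => /ip_self_eq0.
have cn : conjc n = n by rewrite /n conj_ip.
exists (addo W (scaleo n^-1 (outer u u))); split.
  split.
    rewrite mulo_addl !mulo_addr hWW !mulo_scalel !mulo_scaler mulo_outer_l Wu mulo_outer_r hWa Wu.
    rewrite mulo_outer_l appo_outer.
    apply: opr_ext => x y; rewrite /addo /scaleo /outer /vzero /vscale -/n.
    by field.
  by rewrite adjo_add adjo_scale adjo_outer hWa conjc_inv cn.
have appW' v : appo (addo W (scaleo n^-1 (outer u u))) v = vadd (appo W v) (vscale (n^-1 * ip u v) u).
  apply: vect_ext => x; rewrite /appo /addo /scaleo /vadd /vscale.
  under eq_bigr do rewrite mulrDl.
  rewrite big_split /=; congr (_ + _).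
  rewrite /ip -mulrA mulr_suml mulr_sumr; apply: eq_bigr => y _; rewrite /outer; ring.
have ipuL v : inspan L v -> ip u v = 0.
  move=> h; rewrite -(WL _ h) ip_adj hWa Wu /ip big1 // => y _; by rewrite /vzero conjc0' mul0r.
have ipuw : ip u w = n.
  have -> : w = vadd u (appo W w) by apply: vect_ext => x; rewrite /u /vadd /vscale; ring.
  rewrite ip_vaddr (ipuL (appo W w)) ?addr0 //; apply/(hWL (appo W w)); by rewrite -appo_mulo hWW.
move=> v; rewrite appW'; split=> [hv|[c [u' [hu' ->]]]] /=.
  exists (n^-1 * ip u v), (vadd (appo W v) (vscale (- (n^-1 * ip u v)) (appo W w))); split.
    apply: hLD; first by apply/hWL; rewrite -appo_mulo hWW.
    by apply: hLS; apply/hWL; rewrite -appo_mulo hWW.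
  rewrite -{1}hv; apply: vect_ext => x; rewrite /vadd /vscale /u /vadd /vscale; ring.
rewrite ip_vaddr ip_vscaler ipuw (ipuL u' hu') appo_vadd appo_vscale (WL u' hu').
apply: vect_ext => x; rewrite /vadd /vscale /u /vadd /vscale /=.
by field.
Qed.

Lemma subspace_proj (X : vect -> Prop) : subspace X ->
  exists W, projector W /\ forall v, appo W v = v <-> X v.
Proof.
move=> hX; have [L hL] := fin_span hX; have [W [hW hWL]] := proj_span L.
by exists W; split=> // v; rewrite hWL hL.
Qed.

End Span.

Section Cvg.
Context (R : realType).
Local Notation C := R[i].
Local Notation N := (@Normc.normc R).
Implicit Types u v : nat -> C.
Implicit Types l : C.

Lemma cvgCE (u : nat -> C) l : cvgC u l <-> forall e : R, 0 < e -> exists M, forall n, (M <= n)%N -> N (u n - l) < e.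
Proof. by split=> h e e0; have [M hM] := h e e0; exists M => n hn; have := hM n hn; rewrite ltcR. Qed.

Lemma N_ge0 (z : C) : 0 <= N z.
Proof. by case: z => a b; rewrite /Normc.normc sqrtr_ge0. Qed.
Lemma N_sub_sym (z w : C) : N (z - w) = N (w - z).
Proof. by rewrite -normcN opprB. Qed.
Lemma N_Re (a b : R) : `|a| <= N (Complex a b).
Proof.
 rewrite /Normc.normc -sqrtr_sqr ler_wsqrtr //.
by rewrite lerDl sqr_ge0.
Qed.
Lemma N_Im (a b : R) : `|b| <= N (Complex a b).
Proof.
 rewrite /Normc.normc -sqrtr_sqr ler_wsqrtr //.
by rewrite lerDr sqr_ge0.
Qed.
Lemma N_conj (z : C) : N (conjc z) = N z.
Proof. by case: z => a b; rewrite /Normc.normc /= sqrrN. Qed.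

Lemma cvgC_unique u l1 l2 : cvgC u l1 -> cvgC u l2 -> l1 = l2.
Proof.
move=> /cvgCE h1 /cvgCE h2; apply: NNPP => ne.
have d0 : 0 < N (l1 - l2).
  rewrite lt_def N_ge0 andbT; apply/eqP => /Normc.eq0_normc /eqP; rewrite subr_eq0 => /eqP.
  exact: ne.
have [M1 hM1] := h1 _ (divr_gt0 d0 (ltr0Sn _ 1)).
have [M2 hM2] := h2 _ (divr_gt0 d0 (ltr0Sn _ 1)).
have := hM1 (maxn M1 M2) (leq_maxl _ _); have := hM2 (maxn M1 M2) (leq_maxr _ _).
set z := u _ => a2 a1.
have : N (l1 - l2) <= N (z - l1) + N (z - l2).
  by rewrite (N_sub_sym z l1); apply: le_trans (le_normcD _ _); rewrite addrA subrK.
move: a1 a2; set d := N (l1 - l2); set p := N (z - l1); set q := N (z - l2) => a1 a2 a3.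
have : d < d / 2%:R + d / 2%:R by apply: le_lt_trans a3 _; apply: ltrD.
have -> : d / 2%:R + d / 2%:R = d by field.
by rewrite ltxx.
Qed.

Lemma cvgC_add u v l1 l2 : cvgC u l1 -> cvgC v l2 -> cvgC (fun n => u n + v n) (l1 + l2).
Proof.
move=> /cvgCE h1 /cvgCE h2; apply/cvgCE => e e0.
have e2 : 0 < e / 2%:R by rewrite divr_gt0.
have [M1 hM1] := h1 _ e2; have [M2 hM2] := h2 _ e2.
exists (maxn M1 M2) => n hn.
have a1 := hM1 n (leq_trans (leq_maxl _ _) hn); have a2 := hM2 n (leq_trans (leq_maxr _ _) hn).
have -> : u n + v n - (l1 + l2) = (u n - l1) + (v n - l2) by ring.
apply: le_lt_trans (le_normcD _ _) _.
have -> : e = e / 2%:R + e / 2%:R by field.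
exact: ltrD.
Qed.

Lemma cvgC_scale c u l : cvgC u l -> cvgC (fun n => c * u n) (c * l).
Proof.
move=> /cvgCE h; apply/cvgCE => e e0.
have c1 : 0 < N c + 1 by apply: (@lt_le_trans _ _ 1) => //; rewrite lerDr N_ge0.
have [M hM] := h _ (divr_gt0 e0 c1).
exists M => n hn; rewrite -mulrBr Normc.normcM.
have a := hM n hn.
have : N c * N (u n - l) <= N c * (e / (N c + 1)) by rewrite ler_wpM2l ?N_ge0 // ltW.
move=> b; apply: le_lt_trans b _.
rewrite mulrA ltr_pdivrMr //; nra.
Qed.

Lemma cvgC_conj u l : cvgC u l -> cvgC (fun n => conjc (u n)) (conjc l).
Proof.
move=> /cvgCE h; apply/cvgCE => e e0; have [M hM] := h _ e0.
by exists M => n hn; rewrite -conjcB' N_conj; apply: hM.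
Qed.

Lemma cvgC_const l : cvgC (fun _ => l) l.
Proof. by apply/cvgCE => e e0; exists 0%N => n _; rewrite subrr Normc.normc0. Qed.

Lemma cvgC_ext u v l : (forall n, u n = v n) -> cvgC u l -> cvgC v l.
Proof. by move=> h; have -> : v = u by apply: functional_extensionality => n; rewrite h. Qed.

Lemma cvgC_sum (J : Type) (s : seq J) (f : J -> nat -> C) (L : J -> C) :
  (forall j, cvgC (f j) (L j)) -> cvgC (fun n => \sum_(j <- s) f j n) (\sum_(j <- s) L j).
Proof.
move=> h; elim: s => [|j s IH].
  rewrite big_nil; apply: cvgC_ext (cvgC_const 0) => n; by rewrite big_nil.
rewrite big_cons; apply: cvgC_ext (cvgC_add (h j) IH) => n; by rewrite big_cons.
Qed.

Lemma cvgC_ge0 u l : (forall n, 0 <= u n) -> cvgC u l -> 0 <= l.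
Proof.
move=> h0 /cvgCE h; case: l h => a b h; rewrite lecE /=.
have im0 : b = 0.
  apply: NNPP => bn.
  have [M hM] := h `|b| ltac:(by rewrite normr_gt0; apply/eqP).
  have := hM M (leqnn M); have := h0 M; case: (u M) => c d; rewrite lecE /= => /andP [/eqP d0 _].
  move=> lt; have le := N_Im (c - a) (d - b); rewrite /= in le; rewrite d0 in le lt.
  have : `|0 - b| < `|b| by apply: le_lt_trans le lt.
  by rewrite sub0r normrN ltxx.
rewrite im0 eqxx /=; rewrite leNgt; apply/negP => an.
have [M hM] := h (- a) ltac:(by rewrite oppr_gt0).
have := hM M (leqnn M); have := h0 M; case: (u M) => c d; rewrite lecE /= => /andP [_ c0].
move=> lt; have le := N_Re (c - a) (d - b); rewrite /= in le.
have : `|c - a| < - a by apply: le_lt_trans le lt.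
rewrite ltr_norml => /andP [_]; rewrite ltrBlDr; lra.
Qed.

End Cvg.

Section Good.
Context (R : realType) (I : finType).
Local Notation C := R[i].
Local Notation opr := (opr R I).
Local Notation vect := (vect R I).
Local Notation superop := (superop R I).
Implicit Types A B D P Q W X Y : opr.
Implicit Types u v w : vect.
Implicit Types E F : superop.

Definition good E := linear_so E /\ forall rho, psd rho -> psd (E rho).

Lemma sf_double A v : sf A v v = \sum_x \sum_y conjc (v x) * A x y * v y.
Proof.
rewrite /sf /ip /appo; apply: eq_bigr => x _.
by rewrite big_distrr /=; apply: eq_bigr => y _; rewrite mulrA.
Qed.

Section Lin.
Variable E : superop.
Hypothesis hE : linear_so E.
Lemma lin0 : E (zeroo R (I:=I)) = zeroo R (I:=I).
Proof.
have := hE 1 (zeroo R (I:=I)) (zeroo R (I:=I)).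
have -> : addo (scaleo 1 (zeroo R (I:=I))) (zeroo R (I:=I)) = zeroo R (I:=I).
  by apply: opr_ext => x y; rewrite /addo /scaleo /zeroo mulr0 addr0.
move=> e; apply: opr_ext => x y; have := congr1 (fun f => f x y) e.
rewrite /addo /scaleo mul1r /zeroo => e2.
set z := E _ x y in e2 *; have h : z + z = z + 0 by rewrite addr0 -e2.
by rewrite (addrI _ h).
Qed.
Lemma linD A B : E (addo A B) = addo (E A) (E B).
Proof.
have -> : addo A B = addo (scaleo 1 A) B by apply: opr_ext => x y; rewrite /addo /scaleo mul1r.
by rewrite hE; apply: opr_ext => x y; rewrite /addo /scaleo mul1r.
Qed.
Lemma linZ c A : E (scaleo c A) = scaleo c (E A).
Proof.
have -> : scaleo c A = addo (scaleo c A) (zeroo R (I:=I)) by apply: opr_ext => x y; rewrite /addo /zeroo addr0.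
by rewrite hE lin0; apply: opr_ext => x y; rewrite /addo /zeroo addr0.
Qed.
Lemma linB A B : E (subo A B) = subo (E A) (E B).
Proof.
have -> : subo A B = addo A (scaleo (-1) B) by apply: opr_ext => x y; rewrite /addo /subo /scaleo mulN1r.
by rewrite linD linZ; apply: opr_ext => x y; rewrite /addo /subo /scaleo mulN1r.
Qed.
Lemma lin_sum (J : Type) (s : seq J) (f : J -> opr) :
  E (fun x y => \sum_(j <- s) f j x y) = fun x y => \sum_(j <- s) E (f j) x y.
Proof.
elim: s => [|j s IH].
  have -> : (fun x y => \sum_(j <- [::]) f j x y) = zeroo R (I:=I) by apply: opr_ext => x y; rewrite big_nil.
  by rewrite lin0; apply: opr_ext => x y; rewrite big_nil.
have -> : (fun x y => \sum_(j0 <- j :: s) f j0 x y) = addo (f j) (fun x y => \sum_(j <- s) f j x y).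
  by apply: opr_ext => x y; rewrite big_cons.
by rewrite linD IH; apply: opr_ext => x y; rewrite /addo big_cons.
Qed.
End Lin.

Lemma good_id : good (fun rho => rho).
Proof. by split. Qed.
Lemma good_zero : good (fun _ => zeroo R (I:=I)).
Proof.
split=> [a A B|rho _]; last exact: psd_zero.
by apply: opr_ext => x y; rewrite /addo /scaleo /zeroo mulr0 addr0.
Qed.
Lemma good_sandw X : good (fun rho => mulo (mulo X rho) (adjo X)).
Proof.
split=> [a A B|rho h]; last exact: psd_sandw.
by rewrite mulo_addr mulo_addl mulo_scaler mulo_scalel.
Qed.
Lemma good_comp E0 E1 : good E0 -> good E1 -> good (fun rho => E1 (E0 rho)).
Proof.
move=> [l0 p0] [l1 p1]; split=> [a A B|rho h]; last by apply: p1; apply: p0.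
by rewrite l0 l1.
Qed.
Lemma good_add E0 E1 : good E0 -> good E1 -> good (fun rho => addo (E0 rho) (E1 rho)).
Proof.
move=> [l0 p0] [l1 p1]; split=> [a A B|rho h]; last by apply: psd_add; [apply: p0|apply: p1].
by rewrite l0 l1; apply: opr_ext => x y; rewrite /addo /scaleo; ring.
Qed.
Lemma good_scale c E : 0 <= c -> good E -> good (fun rho => scaleo c (E rho)).
Proof.
move=> c0 [l p]; split=> [a A B|rho h]; last by apply: psd_scale => //; apply: p.
by rewrite l; apply: opr_ext => x y; rewrite /addo /scaleo; ring.
Qed.
Lemma good_sum (J : Type) (s : seq J) (f : J -> superop) :
  (forall j, good (f j)) -> good (fun rho => fun x y => \sum_(j <- s) f j rho x y).
Proof.
move=> h; split=> [a A B|rho hr]; last by apply: psd_sum => j; apply: (proj2 (h j)).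
apply: opr_ext => x y; rewrite /addo /scaleo mulr_sumr -big_split /=; apply: eq_bigr => j _.
by rewrite (proj1 (h j)).
Qed.

Lemma good_lim (U : nat -> superop) E : (forall n, good (U n)) ->
  (forall rho, cvg_op (fun n => U n rho) (E rho)) -> good E.
Proof.
move=> hU hc; split=> [a A B|rho hr].
  apply: opr_ext => x y; apply: (cvgC_unique (hc _ x y)).
  apply: cvgC_ext (cvgC_add (cvgC_scale a (hc A x y)) (hc B x y)) => n.
  by rewrite (proj1 (hU n)).
apply/psdE; split=> [x y|v].
  apply: (cvgC_unique (hc _ x y)).
  apply: cvgC_ext (cvgC_conj (hc rho y x)) => n.
  by have /psdE [h _] := proj2 (hU n) rho hr; rewrite -h.
rewrite sf_double; apply: (@cvgC_ge0 _ (fun n => sf (U n rho) v v)).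
  by move=> n; have /psdE [_ h] := proj2 (hU n) rho hr; apply: h.
apply: (@cvgC_ext _ (fun n => \sum_x \sum_y conjc (v x) * U n rho x y * v y)); first by move=> n; rewrite sf_double.
apply: cvgC_sum => x; apply: cvgC_sum => y.
have -> : conjc (v x) * E rho x y * v y = (conjc (v x) * v y) * E rho x y by ring.
apply: cvgC_ext (cvgC_scale (conjc (v x) * v y) (hc rho x y)) => n /=.
by ring.
Qed.

End Good.

Section Reindex.
Context (R : realType) (I J : finType) (phi : I -> J).
Local Notation C := R[i].

Lemma sum_ifeq (T : finType) (p : T) (f : T -> C) : \sum_x (if x == p then f x else 0) = f p.
Proof. by rewrite -big_mkcond big_pred1_eq. Qed.

Lemma sum_part (f : I -> C) : \sum_a f a = \sum_j \sum_(a | phi a == j) f a.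
Proof. by rewrite (partition_big phi predT). Qed.

Lemma double_part (H : I -> I -> J -> J -> C) :
  \sum_a \sum_b H a b (phi a) (phi b) = \sum_i \sum_j \sum_(a | phi a == i) \sum_(b | phi b == j) H a b i j.
Proof.
rewrite sum_part; apply: eq_bigr => i _.
under eq_bigr => a ha do rewrite sum_part (eqP ha).
rewrite exchange_big /=; apply: eq_bigr => j _; apply: eq_bigr => a _.
by apply: eq_bigr => b /eqP ->.
Qed.

Definition pushop (rho : opr R I) : opr R J :=
  fun i j => \sum_(x | phi x == i) \sum_(y | phi y == j) rho x y.
Definition pullop (tau : opr R J) : opr R I := fun a b => tau (phi a) (phi b).

Lemma psd_pull tau : psd tau -> psd (pullop tau).
Proof.
move=> /psdE [h1 h2]; apply/psdE; split=> [x y|v]; first by rewrite /pullop h1.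
pose w j := \sum_(a | phi a == j) v a.
suff -> : sf (pullop tau) v v = sf tau w w by apply: h2.
rewrite !sf_double /pullop (double_part (fun a b i j => conjc (v a) * tau i j * v b)).
apply: eq_bigr => i _; apply: eq_bigr => j _.
rewrite /w conjc_sum big_distrl big_distrl /=; apply: eq_bigr => a _.
by rewrite big_distrr.
Qed.

Lemma psd_push rho : psd rho -> psd (pushop rho).
Proof.
move=> /psdE [h1 h2]; apply/psdE; split=> [x y|w].
  rewrite /pushop conjc_sum exchange_big /=; apply: eq_bigr => b _.
  by rewrite conjc_sum; apply: eq_bigr => a _; rewrite h1.
suff -> : sf (pushop rho) w w = sf rho (fun a => w (phi a)) (fun a => w (phi a)) by apply: h2.
rewrite !sf_double (double_part (fun a b i j => conjc (w i) * rho a b * w j)).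
apply: eq_bigr => i _; apply: eq_bigr => j _.
rewrite /pushop big_distrr big_distrl /=; apply: eq_bigr => a _.
rewrite big_distrr big_distrl /=; by [].
Qed.

End Reindex.

Section LinExp.
Context (R : realType) (K : finType).
Lemma lin_expand (F : superop R K) (M : opr R K) : linear_so F ->
  F M = fun p q => \sum_x' \sum_y' M x' y' * F (unito R x' y') p q.
Proof.
move=> hF.
have hM : M = fun p q => \sum_(x' <- index_enum K) (fun p q => \sum_(y' <- index_enum K) scaleo (M x' y') (unito R x' y') p q) p q.
  apply: opr_ext => p q /=; rewrite /scaleo /unito.
  transitivity (\sum_x' (if x' == p then \sum_y' (if y' == q then M x' y' else 0) else 0)).
    by rewrite sum_ifeq sum_ifeq.
  apply: eq_bigr => x' _; rewrite [p == x']eq_sym; case: (x' == p).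
    by apply: eq_bigr => y' _; rewrite [q == y']eq_sym /=; case: (y' == q); rewrite ?mulr1 ?mulr0.
  by rewrite big1 // => y' _ /=; rewrite mulr0.
rewrite {1}hM lin_sum //; apply: opr_ext => p q; apply: eq_bigr => x' _.
rewrite lin_sum //; apply: eq_bigr => y' _; by rewrite linZ.
Qed.
End LinExp.

Section Sem.
Context (R : realType) (V : finType).
Local Notation C := R[i].
Local Notation B := (basis V).
Local Notation opr := (opr R B).

Lemma agree_sym (r : seq V) x y : agree_out r x y = agree_out r y x.
Proof. by apply: eq_forallb => v; rewrite eq_sym. Qed.

Lemma adjo_ext (r : seq V) (A : Defs.opr R (lbasis r)) : adjo (ext A) = ext (adjo A).
Proof.
apply: opr_ext => x y; rewrite /adjo /ext agree_sym.
by case: (agree_out r x y) => //; rewrite conjc0'.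
Qed.

Lemma adjo_unito (K : finType) (a b : K) : adjo (unito R a b) = unito R b a.
Proof.
apply: opr_ext => x y; rewrite /adjo /unito andbC.
by case: (_ && _); rewrite ?conjc1' ?conjc0'.
Qed.

Lemma restrict_inj : injective (@restrict V (enum V)).
Proof.
move=> a b h; apply/ffunP => v.
have hv : (index v (enum V) < size (enum V))%N by rewrite index_mem mem_enum.
have := congr1 (fun f : lbasis (enum V) => f (Ordinal hv)) h; rewrite !ffunE.
by rewrite (tnth_nth v) /= nth_index ?mem_enum.
Qed.

Lemma ext_loc (P : opr) : ext (loc P) = P.
Proof.
apply: opr_ext => x y; rewrite /ext.
have -> : agree_out (enum V) x y.
  by apply/forallP => v; rewrite mem_enum.
rewrite /loc.
transitivity (\sum_a (if a == x then \sum_b (if b == y then P a b else 0) else 0)); last first.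
  by rewrite sum_ifeq sum_ifeq.
apply: eq_bigr => a _; rewrite (inj_eq restrict_inj); case: (a == x) => /=.
  by apply: eq_bigr => b _; rewrite (inj_eq restrict_inj).
by rewrite big1.
Qed.

(* reindexing for ext_so *)
Definition clr (r : seq V) (a : B) : B := [ffun v => if v \in r then false else a v].
Definition phiV (r : seq V) (a : B) : (lbasis r * 'I_#|B|)%type :=
  (restrict r a, enum_rank (clr r a)).

Lemma agree_clr (r : seq V) a x : agree_out r a x = (clr r x == clr r a).
Proof.
apply/idP/idP.
  move/forallP => h; apply/eqP/ffunP => v; rewrite !ffunE; case: ifP => // /negbT hv.
  by have := h v; rewrite hv /= => /eqP.
move/eqP/ffunP => h; apply/forallP => v; apply/implyP => hv.
by have := h v; rewrite !ffunE (negbTE hv) => ->.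
Qed.

Lemma ext_so_linear (r : seq V) (F : superop R (lbasis r)) : linear_so (ext_so F).
Proof.
move=> c A D; apply: opr_ext => a b; rewrite /ext_so /addo /scaleo mulr_sumr -big_split /=.
apply: eq_bigr => x _; rewrite mulr_sumr -big_split /=; apply: eq_bigr => y _; ring.
Qed.

Lemma ext_so_pull (r : seq V) (F : superop R (lbasis r)) rho : linear_so F ->
  ext_so F rho = pullop (phiV r) (ampl F (pushop (phiV r) rho)).
Proof.
move=> hF; apply: opr_ext => a b; rewrite /pullop /ampl /= (lin_expand _ hF) /=.
set G := fun x' y' => F (unito R x' y') (restrict r a) (restrict r b).
set oa := enum_rank (clr r a); set ob := enum_rank (clr r b).
rewrite /ext_so.
pose H := fun x y (i j : (lbasis r * 'I_#|B|)%type) =>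
   rho x y * (if (i.2 == oa) && (j.2 == ob) then G i.1 j.1 else 0).
transitivity (\sum_x \sum_y H x y (phiV r x) (phiV r y)).
  apply: eq_bigr => x _; apply: eq_bigr => y _ /=.
  by rewrite /H /phiV /= /oa /ob (inj_eq enum_rank_inj) (inj_eq enum_rank_inj) -!agree_clr.
rewrite (double_part (phiV r) H) /H.
have pairE (g : (lbasis r * 'I_#|B|)%type -> C) : \sum_p g p = \sum_x' \sum_k g (x', k).
  by rewrite pair_bigA; apply: eq_bigr => -[].
rewrite pairE; apply: eq_bigr => x' _.
transitivity (\sum_k (if k == oa then \sum_y' (pushop (phiV r) rho (x', oa) (y', ob) * G x' y') else 0)); last first.
  by rewrite sum_ifeq.
apply: eq_bigr => k _; rewrite pairE /=.
case: (eqVneq k oa) => [->|hk].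
  apply: eq_bigr => y' _.
  transitivity (\sum_l (if l == ob then pushop (phiV r) rho (x', oa) (y', ob) * G x' y' else 0)); last first.
    by rewrite sum_ifeq.
  apply: eq_bigr => l _ /=; case: (eqVneq l ob) => [->|hl].
    rewrite /= /pushop big_distrl /=; apply: eq_bigr => x _; by rewrite big_distrl.
  by rewrite big1 // => x _; rewrite big1 // => y _; rewrite /= ?andbF mulr0.
rewrite big1 // => y' _; rewrite big1 // => l _; rewrite big1 // => x _; rewrite big1 // => y _.
by rewrite /= mulr0.
Qed.

Lemma good_ext_so (r : seq V) (F : superop R (lbasis r)) : cptn F -> good (ext_so F).
Proof.
case=> hl hc _; split; first exact: ext_so_linear.
move=> rho hr; rewrite ext_so_pull //; apply: psd_pull; apply: hc; exact: psd_push.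
Qed.

End Sem.

Section SemGood.
Context (R : realType) (V : finType).
Local Notation C := R[i].
Local Notation B := (basis V).
Local Notation opr := (opr R B).

Lemma herm_ext (r : seq V) (P : Defs.opr R (lbasis r)) : projector P -> adjo (ext P) = ext P.
Proof. by move=> hP; rewrite adjo_ext (proj_herm hP). Qed.

Lemma adjo_orthc (A : opr) : adjo (orthc A) = orthc (adjo A).
Proof. by rewrite /orthc adjo_sub adjo1. Qed.

Lemma good_sandw_h (X : opr) : adjo X = X -> good (fun rho => mulo (mulo X rho) X).
Proof. by move=> h; have := good_sandw X; rewrite h. Qed.

Lemma sem_good (S : prog R V) : wf S -> forall E, sem S E -> good E.
Proof.
elim: S => [||r|r U|r P|r P Q|p S0 IH0 S1 IH1|S0 IH0 S1 IH1|r P S1 IH1 S0 IH0|r P Sb IH] /=.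
- by move=> _ E ->; exact: good_id.
- by move=> _ E ->; exact: good_zero.
- move=> _ E ->.
  set z := [ffun _ => false].
  have e i : ext (unito R i z) = adjo (ext (unito R z i)) by rewrite adjo_ext adjo_unito.
  have -> : (fun rho : opr => fun a b => \sum_(i : lbasis r) mulo (mulo (ext (unito R z i)) rho) (ext (unito R i z)) a b)
     = (fun rho => fun a b => \sum_(i <- index_enum (lbasis r)) (fun i (rho : opr) => mulo (mulo (ext (unito R z i)) rho) (adjo (ext (unito R z i)))) i rho a b).
    by apply: functional_extensionality => rho; apply: opr_ext => a b; apply: eq_bigr => i _; rewrite e.
  by apply: good_sum => i; exact: good_sandw.
- by move=> _ E ->; exact: good_sandw.
- by move=> [_ hP] E ->; apply: good_sandw_h; exact: herm_ext.
- by move=> _ E [F [hF _ ->]]; exact: good_ext_so.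
- move=> [/andP [p0 p1] w0 w1] E [E0 [E1 [h0 h1 ->]]].
  apply: good_add; apply: good_scale; [by rewrite ler0c | exact: IH0 | by rewrite ler0c subr_ge0 | exact: IH1].
- by move=> [w0 w1] E [E0 [E1 [h0 h1 ->]]]; exact: good_comp (IH0 w0 _ h0) (IH1 w1 _ h1).
- move=> [_ hP w1 w0] E [E1 [E0 [h1 h0 ->]]].
  apply: good_add; apply: good_comp; [apply: good_sandw_h; exact: herm_ext | exact: IH1 |
    apply: good_sandw_h; rewrite adjo_orthc herm_ext // | exact: IH0].
move=> [_ hP wb] E [Es [hEs hc]].
set Pm := fun s : opr => mulo (mulo (ext P) s) (ext P).
set Pp := orthc (ext P).
have gPm : good Pm by apply: good_sandw_h; exact: herm_ext.
have gPp : good (fun rho => mulo (mulo Pp rho) Pp).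
  by apply: good_sandw_h; rewrite /Pp adjo_orthc herm_ext.
have glb k : good (loop_body Pm Es k).
  elim: k => [|k IHk] /=; first exact: good_id.
  by apply: good_comp (IH wb _ (hEs k)); apply: good_comp gPm.
apply: (good_lim (U := fun n rho => fun x y => \sum_(j <- index_enum 'I_n)
   (fun (j : 'I_n) rho => mulo (mulo Pp (loop_body Pm Es j rho)) Pp) j rho x y)).
  move=> n; apply: good_sum => j; exact: good_comp (glb j) gPp.
by move=> rho; exact: hc.
Qed.

End SemGood.

Section Gen.
Context (R : realType) (I : finType).
Local Notation C := R[i].
Local Notation opr := (opr R I).
Local Notation vect := (vect R I).
Implicit Types A B D P Q W X Y : opr.
Implicit Types u v w : vect.

Lemma psd_herm A : psd A -> herm A. Proof. by case. Qed.

Lemma mulo_orthc_r A W : mulo A (orthc W) = subo A (mulo A W).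
Proof. by rewrite /orthc mulo_subr mulo1r. Qed.
Lemma mulo_orthc_l A W : mulo (orthc W) A = subo A (mulo W A).
Proof. by rewrite /orthc mulo_subl mulo1l. Qed.

Lemma colz A W : psd A -> projector W -> (forall x, sf A (colo W x) (colo W x) = 0) -> models A (orthc W).
Proof.
move=> hA hW h.
have z : mulo A W = zeroo R (I:=I).
  apply: opr_ext => a x; have := congr1 (fun f => f a) (psd_null hA (h x)).
  by rewrite /= /appo /mulo /colo /zeroo.
have e : mulo A (orthc W) = A by rewrite mulo_orthc_r z; apply: opr_ext => x y; rewrite /subo /zeroo subr0.
apply: mulo_models; have := congr1 (@adjo R I) e.
by rewrite adjo_mulo (herm_adjo (psd_herm hA)) (proj_herm (orthc_proj hW)).
Qed.

Definition gQ Q A : C := \sum_x sf A (colo (orthc Q) x) (colo (orthc Q) x).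

Lemma gQ_ge0 Q A : psd A -> 0 <= gQ Q A.
Proof. by move=> /psdE [_ h]; apply: sumr_ge0 => x _; apply: h. Qed.

Lemma models_gQ Q A : psd A -> projector Q -> (models A Q <-> gQ Q A = 0).
Proof.
move=> hA hQ; split=> [hm|h0].
  have e : mulo A (orthc Q) = zeroo R (I:=I).
    rewrite mulo_orthc_r (models_mulo_r hQ (psd_herm hA) hm).
    by apply: opr_ext => x y; rewrite /subo /zeroo subrr.
  rewrite /gQ big1 // => x _; rewrite /sf.
  have -> : appo A (colo (orthc Q) x) = fun _ => 0.
    by rewrite -appo_ev -appo_mulo e appo_ev.
  by rewrite /ip big1 // => y _; rewrite mulr0.
rewrite -(orthcK Q); apply: colz => //; first exact: orthc_proj.
move=> x; have /psdE [_ hs] := hA.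
by apply: (@psumr_eq0P _ _ predT (fun x => sf A (colo (orthc Q) x) (colo (orthc Q) x))) => // y _; apply: hs.
Qed.

Lemma sf_sum (J : Type) (s : seq J) (f : J -> opr) u :
  sf (fun x y => \sum_(j <- s) f j x y) u u = \sum_(j <- s) sf (f j) u u.
Proof.
elim: s => [|j s IH].
  rewrite big_nil /sf /ip big1 // => x _; rewrite /appo big1 ?mulr0 // => y _; by rewrite big_nil mul0r.
have -> : (fun x y => \sum_(j0 <- j :: s) f j0 x y) = addo (f j) (fun x y => \sum_(j <- s) f j x y).
  by apply: opr_ext => x y; rewrite big_cons.
by rewrite sf_add IH big_cons.
Qed.

Lemma gQ_add Q A D : gQ Q (addo A D) = gQ Q A + gQ Q D.
Proof. by rewrite /gQ -big_split /=; apply: eq_bigr => x _; rewrite sf_add. Qed.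
Lemma gQ_scale Q c A : gQ Q (scaleo c A) = c * gQ Q A.
Proof. by rewrite /gQ mulr_sumr; apply: eq_bigr => x _; rewrite sf_scale. Qed.
Lemma gQ_sum Q (J : Type) (s : seq J) (f : J -> opr) :
  gQ Q (fun x y => \sum_(j <- s) f j x y) = \sum_(j <- s) gQ Q (f j).
Proof. rewrite /gQ [RHS]exchange_big /=; apply: eq_bigr => x _; exact: sf_sum. Qed.

Lemma outer_expand u w t :
  outer (vadd u (vscale t w)) (vadd u (vscale t w)) =
  addo (addo (outer u u) (scaleo (conjc t) (outer u w))) (addo (scaleo t (outer w u)) (scaleo (t * conjc t) (outer w w))).
Proof.
apply: opr_ext => x y; rewrite /outer /vadd /vscale /addo /scaleo conjcD' conjcM'; ring.
Qed.

Lemma outer_decomp A : A = fun x y => \sum_j outer (colo A j) (ev R j) x y.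
Proof.
apply: opr_ext => x y; rewrite /outer /colo /ev.
rewrite (bigD1 y) //= eqxx conjc1' mulr1 big1 ?addr0 // => j /negbTE hj.
by rewrite eq_sym hj conjc0' mulr0.
Qed.

Lemma outer0 : outer (fun _ => 0) (fun _ => 0) = zeroo R (I:=I).
Proof. by apply: opr_ext => x y; rewrite /outer /zeroo mul0r. Qed.

Lemma outer_scale c u : outer (vscale c u) (vscale c u) = scaleo (c * conjc c) (outer u u).
Proof. by apply: opr_ext => x y; rewrite /outer /vscale /scaleo conjcM'; ring. Qed.

Lemma vadd1 u w : vadd u (vscale 1 w) = vadd u w.
Proof. by apply: vect_ext => x; rewrite /vadd /vscale mul1r. Qed.

End Gen.

Section Main.
Context (R : realType) (V : finType).
Local Notation C := R[i].
Local Notation B := (basis V).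
Local Notation opr := (opr R B).
Local Notation prog := (prog R V).
Implicit Types P Q W X Y : opr.

Lemma hoare_psd P (S : prog) Q E rho : hoare P S Q -> wf S -> sem S E -> psd rho -> models rho P ->
  models (E rho) Q.
Proof.
move=> hH wS hE hr hm.
have [lE _] := sem_good wS hE.
have t0 : 0 <= traceo rho := trace_ge0 hr.
have t1 : 0 < 1 + traceo rho by apply: (@lt_le_trans _ _ 1) => //; rewrite lerDl.
set c := (1 + traceo rho)^-1.
have c0 : 0 <= c by rewrite invr_ge0 ltW.
have hpdo : pdo (scaleo c rho).
  split; first exact: psd_scale.
  rewrite /traceo /scaleo -mulr_sumr -/(traceo rho) /c mulrC ler_pdivrMr // mul1r.
  by rewrite addrC lerDl.
have := hH _ _ hpdo hE (models_scale c hm).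
rewrite (linZ lE) => hm2.
have -> : E rho = scaleo c^-1 (scaleo c (E rho)).
  apply: opr_ext => x y; rewrite /scaleo mulrA mulVf ?mul1r //.
  by rewrite invr_eq0 gt_eqF.
exact: models_scale.
Qed.

Lemma equiv_same (S1 S2 : prog) :
  (forall E1, sem S1 E1 -> exists E2, sem S2 E2 /\ forall rho, pdo rho -> E1 rho = E2 rho) ->
  (forall E2, sem S2 E2 -> exists E1, sem S1 E1 /\ forall rho, pdo rho -> E2 rho = E1 rho) ->
  prog_equiv S1 S2.
Proof.
move=> h12 h21; split=> P Q _ _ hH rho E hr hE hm.
  by have [E1 [s1 e]] := h21 E hE; rewrite e //; apply: hH.
by have [E2 [s2 e]] := h12 E hE; rewrite e //; apply: hH.
Qed.

Lemma psd_sand P rho : projector P -> psd rho -> psd (mulo (mulo P rho) P).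
Proof. by move=> hP hr; have := psd_sandw P hr; rewrite (proj_herm hP). Qed.
Lemma models_sand P rho : projector P -> models (mulo (mulo P rho) P) P.
Proof.
move=> hP; apply: mulo_models.
by rewrite -mulo_assoc -mulo_assoc (proj_idem hP).
Qed.
Lemma sand_models P rho : projector P -> psd rho -> models rho P -> mulo (mulo P rho) P = rho.
Proof.
move=> hP hr hm; rewrite (models_mulo hP hm); exact: models_mulo_r hP (psd_herm hr) hm.
Qed.

Lemma keyA P Q (S : prog) E rho : projector P -> projector Q -> hoare P S Q -> wf S -> sem S E -> psd rho ->
  mulo (mulo Q (E (mulo (mulo P rho) P))) Q = E (mulo (mulo P rho) P).
Proof.
move=> hP hQ hH wS hE hr.
have [_ pE] := sem_good wS hE.
apply: sand_models => //; first by apply: pE; exact: psd_sand.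
apply: (hoare_psd hH wS hE); [exact: psd_sand | exact: models_sand].
Qed.

Lemma partA1 P Q (S : prog) : projector P -> projector Q -> wf S ->
  (prog_equiv (Seq (assertV P) S) (Seq (Seq (assertV P) S) (assertV Q)) <-> hoare P S Q).
Proof.
move=> hP hQ wS; split.
  move=> [_ r21] rho E hr hE hm.
  have hR : hoare P (Seq (Seq (assertV P) S) (assertV Q)) Q.
    move=> rho' E' _ [E0 [E1 [_ -> ->]]] _ /=; rewrite ext_loc.
    by apply: mulo_models; rewrite -mulo_assoc -mulo_assoc (proj_idem hQ).
  have := r21 P Q hP hQ hR rho (fun rho => E (mulo (mulo (ext (loc P)) rho) (ext (loc P)))) hr.
  rewrite ext_loc sand_models //; last by case: hr.
  apply => //.
  by exists (fun rho => mulo (mulo (ext (loc P)) rho) (ext (loc P))), E; split => //; rewrite ext_loc.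
move=> hH; apply: equiv_same.
  move=> E' [E0 [E1 [h0 h1 ->]]].
  exists (fun rho => mulo (mulo (ext (loc Q)) (E1 (E0 rho))) (ext (loc Q))); split.
    exists (fun rho => E1 (E0 rho)), (fun rho => mulo (mulo (ext (loc Q)) rho) (ext (loc Q))); split => //.
    by exists E0, E1.
  move=> rho [hr _]; rewrite h0 !ext_loc /=; apply: esym; exact: (keyA hP hQ hH wS h1 hr).
move=> E' [E0 [E1 [[E00 [E01 [h00 h01 ->]]] h1 ->]]].
exists (fun rho => E01 (E00 rho)); split; first by exists E00, E01.
move=> rho [hr _]; rewrite h1 h00 !ext_loc /=; exact: (keyA hP hQ hH wS h01 hr).
Qed.

End Main.

Section MainB.
Context (R : realType) (V : finType).
Local Notation C := R[i].
Local Notation B := (basis V).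
Local Notation opr := (opr R B).
Local Notation prog := (prog R V).
Implicit Types P Q W X Y : opr.

Definition sw X Y (rho : opr) := mulo (mulo X rho) Y.

Lemma split4 P rho : rho = addo (addo (sw P P rho) (sw P (orthc P) rho)) (addo (sw (orthc P) P rho) (sw (orthc P) (orthc P) rho)).
Proof.
have hI : addo P (orthc P) = ido R (I:=B) by apply: opr_ext => x y; rewrite /addo /orthc /subo addrC subrK.
rewrite /sw -!mulo_addr -!mulo_addl hI.
by rewrite mulo1l mulo1r.
Qed.

Lemma expand_T (X Y rho : opr) t : adjo X = X -> adjo Y = Y ->
  mulo (mulo (addo X (scaleo t Y)) rho) (adjo (addo X (scaleo t Y))) =
  addo (addo (sw X X rho) (scaleo (conjc t) (sw X Y rho))) (addo (scaleo t (sw Y X rho)) (scaleo (t * conjc t) (sw Y Y rho))).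
Proof.
move=> hX hY; rewrite adjo_add adjo_scale hX hY /sw.
rewrite !mulo_addl !mulo_addr !mulo_scalel !mulo_scaler.
by apply: opr_ext => x y; rewrite /addo /scaleo; ring.
Qed.

Lemma sandD Q A D : mulo (mulo Q (addo A D)) Q = addo (mulo (mulo Q A) Q) (mulo (mulo Q D) Q).
Proof. by rewrite mulo_addr mulo_addl. Qed.
Lemma sandZ Q c A : mulo (mulo Q (scaleo c A)) Q = scaleo c (mulo (mulo Q A) Q).
Proof. by rewrite mulo_scaler mulo_scalel. Qed.

Lemma keyB P Q (S : prog) E rho : projector P -> projector Q -> hoare (orthc P) S (orthc Q) -> wf S -> sem S E -> psd rho ->
  mulo (mulo Q (E rho)) Q = mulo (mulo Q (E (mulo (mulo P rho) P))) Q.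
Proof.
move=> hP hQ hH wS hE hr.
have [lE pE] := sem_good wS hE.
have hPp := orthc_proj hP; have hQp := orthc_proj hQ.
set Pp := orthc P.
have Dz : mulo (mulo Q (E (sw Pp Pp rho))) Q = zeroo R (I:=B).
  have ps : psd (E (sw Pp Pp rho)) by apply: pE; exact: psd_sand.
  have hm : models (E (sw Pp Pp rho)) (orthc Q).
    by apply: (hoare_psd hH wS hE); [exact: psd_sand | exact: models_sand].
  rewrite -(models_mulo hQp hm) -mulo_assoc (proj_orth hQ) mulo0l mulo0l //.
have hsf : forall u, sf (mulo (mulo Q (E (sw P Pp rho))) Q) u u = 0 /\ sf (mulo (mulo Q (E (sw Pp P rho))) Q) u u = 0.
  move=> u.
  pose h A := sf (mulo (mulo Q (E A)) Q) u u.
  have hadd A D : h (addo A D) = h A + h D by rewrite /h (linD lE) sandD sf_add.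
  have hsc c A : h (scaleo c A) = c * h A by rewrite /h (linZ lE) sandZ sf_scale.
  have hge A : psd A -> 0 <= h A.
    by move=> hA; have /psdE [_ ] := psd_sand hQ (pE _ hA); apply.
  have hz : h (sw Pp Pp rho) = 0.
    rewrite /h /sw in Dz *; rewrite Dz /sf /ip big1 // => x _.
    by rewrite /appo /zeroo big1 ?mulr0 // => y _; rewrite mul0r.
  have key t : 0 <= h (sw P P rho) + t * h (sw Pp P rho) + conjc t * h (sw P Pp rho) + t * conjc t * 0.
    pose T := addo P (scaleo t Pp).
    have eT : mulo (mulo T rho) (adjo T) = addo (addo (sw P P rho) (scaleo (conjc t) (sw P Pp rho)))
        (addo (scaleo t (sw Pp P rho)) (scaleo (t * conjc t) (sw Pp Pp rho))).
      by apply: expand_T; [exact: proj_herm | exact: proj_herm].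
    have := hge _ (psd_sandw T hr); rewrite eT !hadd !hsc hz.
    set a := h (sw P P rho); set b := h (sw P Pp rho); set c := h (sw Pp P rho).
    have -> : a + t * c + conjc t * b + t * conjc t * 0 = a + conjc t * b + (t * c + t * conjc t * 0) by ring.
    by [].
  have [e1 e2] := @GL R (h (sw P P rho)) 0 (h (sw Pp P rho)) (h (sw P Pp rho)) (lexx 0)
      (hge _ (psd_sand hP hr)) (mulr0 _) key.
  by split.
have M1 : mulo (mulo Q (E (sw P Pp rho))) Q = zeroo R (I:=B) by apply: polar => u; case: (hsf u).
have M2 : mulo (mulo Q (E (sw Pp P rho))) Q = zeroo R (I:=B) by apply: polar => u; case: (hsf u).
rewrite {1}(split4 P rho) !(linD lE) !sandD M1 M2 Dz.
by apply: opr_ext => x y; rewrite /addo /zeroo !addr0.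
Qed.

End MainB.

Section MainC.
Context (R : realType) (V : finType).
Local Notation C := R[i].
Local Notation B := (basis V).
Local Notation opr := (opr R B).
Local Notation prog := (prog R V).
Implicit Types P Q W X Y : opr.

Lemma partB1 P Q (S : prog) : projector P -> projector Q -> wf S ->
  (prog_equiv (Seq S (assertV Q)) (Seq (Seq (assertV P) S) (assertV Q)) <-> hoare (orthc P) S (orthc Q)).
Proof.
move=> hP hQ wS; split.
  move=> [_ r21] rho E hr hE hm.
  have hR : hoare (orthc P) (Seq (Seq (assertV P) S) (assertV Q)) (zeroo R (I:=B)).
    move=> rho' E' _ [E0 [E1 [[E00 [E01 [h00 h01 ->]]] h1 ->]]] hm'; rewrite h1 h00 /= !ext_loc.
    have [l01 _] := sem_good wS h01.
    have -> : mulo (mulo P rho') P = zeroo R (I:=B).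
      by rewrite -(models_mulo (orthc_proj hP) hm') -mulo_assoc (proj_orth hP) !mulo0l.
    rewrite (lin0 l01) mulo0r mulo0l; exact: models_zero.
  have := r21 _ _ (orthc_proj hP) (@zero_proj R B) hR rho (fun rho => mulo (mulo (ext (loc Q)) (E rho)) (ext (loc Q))) hr.
  rewrite ext_loc => H.
  have := H ltac:(by exists E, (fun rho => mulo (mulo (ext (loc Q)) rho) (ext (loc Q))); split => //; rewrite ext_loc) hm.
  move/models_zero_eq => z.
  have [_ pE] := sem_good wS hE.
  have ps : psd (E rho) by apply: pE; case: hr.
  apply: colz => // x.
  have -> : colo Q x = appo (adjo Q) (ev R x) by rewrite (proj_herm hQ) appo_ev.
  rewrite -sf_sandw (proj_herm hQ) z /sf /ip big1 // => y _.
  by rewrite /appo /zeroo big1 ?mulr0 // => w _; rewrite mul0r.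
move=> hH; apply: equiv_same.
  move=> E' [E0 [E1 [h0 h1 ->]]].
  exists (fun rho => mulo (mulo (ext (loc Q)) (E0 (mulo (mulo (ext (loc P)) rho) (ext (loc P))))) (ext (loc Q))); split.
    exists (fun rho => E0 (mulo (mulo (ext (loc P)) rho) (ext (loc P)))), (fun rho => mulo (mulo (ext (loc Q)) rho) (ext (loc Q))); split => //.
    by exists (fun rho => mulo (mulo (ext (loc P)) rho) (ext (loc P))), E0.
  move=> rho [hr _]; rewrite h1 /= !ext_loc; exact: (keyB hP hQ hH wS h0 hr).
move=> E' [E0 [E1 [[E00 [E01 [h00 h01 ->]]] h1 ->]]].
exists (fun rho => mulo (mulo (ext (loc Q)) (E01 rho)) (ext (loc Q))); split.
  by exists E01, (fun rho => mulo (mulo (ext (loc Q)) rho) (ext (loc Q))); split.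
move=> rho [hr _]; rewrite h1 h00 /= !ext_loc; apply: esym; exact: (keyB hP hQ hH wS h01 hr).
Qed.

Lemma sp_exists P (S : prog) : exists W, is_sp S P W.
Proof.
pose T (v : vect R B) := exists rho E z, [/\ pdo rho, models rho P, sem S E & v = appo (E rho) z].
pose X (v : vect R B) := forall (Y : vect R B -> Prop), subspace Y -> (forall t, T t -> Y t) -> Y v.
have hX : subspace X.
  split.
  - by move=> Y [h0 _ _] _.
  - by move=> u w hu hw Y hY hT; case: (hY) => _ hD _; apply: hD; [apply: hu | apply: hw].
  - by move=> c u hu Y hY hT; case: (hY) => _ _ hS; apply: hS; apply: hu.
have [W [hW hWX]] := subspace_proj hX.
exists W; split => //.
  move=> rho E hr hE hm v; exists (appo (E rho) v); apply/esym/hWX => Y hY hT.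
  by apply: hT; exists rho, E, v; split.
move=> Q hQ hH v; exists (appo W v); apply: esym.
pose Y (y : vect R B) := appo Q y = y.
have hY : subspace Y.
  split.
  - by apply: vect_ext => x; rewrite /appo /vzero big1 // => y _; rewrite mulr0.
  - by move=> u w hu hw; rewrite /Y appo_vadd hu hw.
  - by move=> c u hu; rewrite /Y appo_vscale hu.
have XWv : X (appo W v) by apply/hWX; rewrite -appo_mulo (proj_idem hW).
apply: (XWv Y hY) => t [rho [E [z [hr hm hE ->]]]].
by apply/(proj_fix _ hQ); apply: (hH rho E hr hE hm).
Qed.

Lemma wlp_exists Q (S : prog) : projector Q -> wf S -> exists W, is_wlp S Q W.
Proof.
move=> hQ wS.
pose G (u : vect R B) := forall E, sem S E -> models (E (outer u u)) Q.
pose gE E (u w : vect R B) := gQ Q (E (outer u w)).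
have gE_ge0 E u : sem S E -> 0 <= gE E u u.
  by move=> hE; have [_ pE] := sem_good wS hE; apply: gQ_ge0; apply: pE; exact: psd_outer.
have gE_exp E u w t : sem S E -> gE E (vadd u (vscale t w)) (vadd u (vscale t w)) =
    gE E u u + t * gE E w u + conjc t * gE E u w + t * conjc t * gE E w w.
  move=> hE; have [lE _] := sem_good wS hE.
  rewrite /gE outer_expand !(linD lE) !(linZ lE) !gQ_add !gQ_scale; ring.
have GE u : G u <-> forall E, sem S E -> gE E u u = 0.
  split=> h E hE; have [_ pE] := sem_good wS hE; have ps : psd (E (outer u u)) by apply: pE; exact: psd_outer.
    by apply/(models_gQ ps hQ); apply: h.
  by apply/(models_gQ ps hQ); apply: h.
have CS E u w : sem S E -> gE E u u = 0 -> gE E u w = 0 /\ gE E w u = 0.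
  move=> hE h0.
  have [e1 e2] := @GL R (gE E u u) (gE E w w) (gE E w u) (gE E u w) (gE_ge0 E w hE) (gE_ge0 E u hE)
    ltac:(by rewrite h0 mul0r) (fun t => ltac:(by rewrite -gE_exp //; apply: gE_ge0)).
  by split.
have hG : subspace G.
  split.
  - move=> E hE; have [lE _] := sem_good wS hE.
    by rewrite /vzero outer0 (lin0 lE); exact: models_zero.
  - move=> u w hu hw; apply/GE => E hE.
    have hu0 : gE E u u = 0 by apply/(proj1 (GE u)).
    have hw0 : gE E w w = 0 by apply/(proj1 (GE w)).
    have [c1 c2] := CS E u w hE hu0.
    by rewrite -vadd1 gE_exp // hu0 hw0 c1 c2 !mulr0 !addr0.
  - move=> c u hu E hE; have [lE _] := sem_good wS hE.
    by rewrite outer_scale (linZ lE); apply: models_scale; apply: hu.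
have [W [hW hWG]] := subspace_proj hG.
exists W; split => //.
  move=> rho E hr hE hm.
  have [lE pE] := sem_good wS hE.
  have ps : psd (E rho) by apply: pE; case: hr.
  apply/(models_gQ ps hQ).
  have e : E rho = fun x y => \sum_(j <- index_enum B) E (outer (colo rho j) (ev R j)) x y.
    by rewrite {1}(outer_decomp rho) (lin_sum lE).
  rewrite e gQ_sum big1 // => j _.
  have Gj : G (colo rho j).
    apply/hWG; rewrite -appo_ev -appo_mulo (models_mulo hW hm) //.
  have [c1 _] := CS E (colo rho j) (ev R j) hE (proj1 (GE _) Gj E hE).
  exact: c1.
move=> P hP hH v; exists (appo P v); apply/esym/hWG => E hE.
apply: (hoare_psd hH wS hE (psd_outer _)).
by apply: models_outer => //; rewrite -appo_mulo (proj_idem hP).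
Qed.

Lemma spE P Q (S : prog) : projector Q -> (sqle (sp S P) Q <-> hoare P S Q).
Proof.
move=> hQ; have [hW hH hmin] : is_sp S P (sp S P).
  by rewrite /sp; apply: epsilon_spec; exact: sp_exists.
split=> [hle rho E hr hE hm|h]; last exact: hmin.
exact: subsp_trans (hH rho E hr hE hm) hle.
Qed.

Lemma wlpE P Q (S : prog) : projector P -> projector Q -> wf S -> (sqle P (wlp S Q) <-> hoare P S Q).
Proof.
move=> hP hQ wS; have [hW hH hmax] : is_wlp S Q (wlp S Q).
  by rewrite /wlp; apply: epsilon_spec; exact: wlp_exists.
split=> [hle rho E hr hE hm|h]; last exact: hmax.
exact: hH rho E hr hE (subsp_trans hm hle).
Qed.

End MainC.

Lemma iff3 (A B H : Prop) : (A <-> H) -> (B <-> H) -> (A <-> B).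
Proof. by move=> [h1 h2] [h3 h4]; split=> h; [apply: h4; apply: h1 | apply: h2; apply: h3]. Qed.

Theorem theorem4p6 (R : realType) (V : finType)
  (P Q : opr R (basis V)) (S : prog R V) :
  projector P -> projector Q -> wf S ->
  (* (a) *)
  ((prog_equiv (Seq (assertV P) S) (Seq (Seq (assertV P) S) (assertV Q))
      <-> sqle (sp S P) Q) /\
   (sqle (sp S P) Q <-> sqle P (wlp S Q)) /\
   (sqle P (wlp S Q) <-> hoare P S Q)) /\
  (* (b) *)
  ((prog_equiv (Seq S (assertV Q)) (Seq (Seq (assertV P) S) (assertV Q))
      <-> sqle (sp S (orthc P)) (orthc Q)) /\
   (sqle (sp S (orthc P)) (orthc Q) <-> sqle (orthc P) (wlp S (orthc Q))) /\
   (sqle (orthc P) (wlp S (orthc Q)) <-> hoare (orthc P) S (orthc Q))).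
Proof.
move=> hP hQ wS.
have hPp := orthc_proj hP; have hQp := orthc_proj hQ.
have a1 := partA1 hP hQ wS.
have a2 : sqle (sp S P) Q <-> hoare P S Q := spE P S hQ.
have a3 : sqle P (wlp S Q) <-> hoare P S Q := wlpE hP hQ wS.
have b1 := partB1 hP hQ wS.
have b2 : sqle (sp S (orthc P)) (orthc Q) <-> hoare (orthc P) S (orthc Q) := spE (orthc P) S hQp.
have b3 : sqle (orthc P) (wlp S (orthc Q)) <-> hoare (orthc P) S (orthc Q) := wlpE hPp hQp wS.
split; split; [exact: iff3 a1 a2 | split; [exact: iff3 a2 a3 | exact: a3] | exact: iff3 b1 b2 | split; [exact: iff3 b2 b3 | exact: b3]].
Qed.
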